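(* For any $n\in\mathbb{Z}$, the group $\langle a,b\mid aba=ba^{n+1}b\rangle$ is isomorphic to the braid group $\mathbb{B}_3$ on three strands.
   Context: $\mathbb{B}_3=\langle x,y\mid xyx=yxy\rangle$ is the Artin braid group on three strands. *)

(* Defs.v *)
(* Finitely presented groups on two generators, modelled
   honestly as words in the free monoid on the generators and their formal
   inverses, modulo the congruence generated by free cancellation and the
   defining relations. *)
From mathcomp Require Import all_boot all_order all_algebra.
Set Implicit Arguments. Unset Strict Implicit. Unset Printing Implicit Defensive.
Import GRing.Theory Num.Theory.

(* A letter is (generator, inverted?); generator false = first, true = second. *)
Definition letter := (bool * bool)%type.
Definition word := seq letter.

Definition inv_letter (x : letter) : letter := (x.1, ~~ x.2).
Definition winv (w : word) : word := rev (map inv_letter w).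

Definition gen1 : word := [:: (false, false)].
Definition gen2 : word := [:: (true, false)].

Definition wpow (w : word) (k : int) : word :=
  match k with
  | Posz m => flatten (nseq m w)
  | Negz m => flatten (nseq m.+1 (winv w))
  end.

Inductive peq (rels : seq (word * word)) : word -> word -> Prop :=
| peq_refl w : peq rels w w
| peq_sym u v : peq rels u v -> peq rels v u
| peq_trans u v w : peq rels u v -> peq rels v w -> peq rels u w
| peq_cancel u v (x : letter) :
    peq rels (u ++ [:: x; inv_letter x] ++ v) (u ++ v)
| peq_rel u v l r : (l, r) \in rels ->
    peq rels (u ++ l ++ v) (u ++ r ++ v).

(* The presented groups <gen1,gen2 | R> and <gen1,gen2 | S> are isomorphic:
   there is a map on words that descends to a bijective group homomorphism
   between the quotients (well defined, multiplicative, injective, surjective). *)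
Definition pres_iso (R S : seq (word * word)) : Prop :=
  exists f : word -> word,
    [/\ (forall u v, peq R u v -> peq S (f u) (f v)),
        (forall u v, peq S (f (u ++ v)) (f u ++ f v)),
        (forall u v, peq S (f u) (f v) -> peq R u v)
      & (forall w, exists u, peq S (f u) w)].

Definition braid3_rels : seq (word * word) :=
  [:: (gen1 ++ gen2 ++ gen1, gen2 ++ gen1 ++ gen2)].

Definition G_rels (n : int) : seq (word * word) :=
  [:: (gen1 ++ gen2 ++ gen1, gen2 ++ wpow gen1 (n + 1) ++ gen2)].

(* Main.v *)
Require Import Defs.
From mathcomp Require Import all_boot all_order all_algebra.
From mathcomp Require Import zify.
Set Implicit Arguments. Unset Strict Implicit. Unset Printing Implicit Defensive.
Import GRing.Theory Num.Theory.
Local Open Scope ring_scope.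

Section Peq.
Variable rels : seq (word * word).
Local Notation pe := (peq rels).

Lemma pe_ctx p q u v : pe u v -> pe (p ++ u ++ q) (p ++ v ++ q).
Proof.
elim=> {u v} [w|u v _ IH|u v w _ IH1 _ IH2|u v x|u v l r Hr].
- exact: peq_refl.
- exact: peq_sym.
- exact: peq_trans IH1 IH2.
- have := peq_cancel rels (p ++ u) (v ++ q) x.
  by rewrite -!catA.
- have := peq_rel (p ++ u) (v ++ q) Hr.
  by rewrite -!catA.
Qed.

Lemma pe_catl p u v : pe u v -> pe (p ++ u) (p ++ v).
Proof. by move=> H; have := pe_ctx p [::] H; rewrite !cats0. Qed.

Lemma pe_catr q u v : pe u v -> pe (u ++ q) (v ++ q).
Proof. by move=> H; have := pe_ctx [::] q H. Qed.

Lemma pe_cat u u' v v' : pe u u' -> pe v v' -> pe (u ++ v) (u' ++ v').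
Proof.
move=> H1 H2; apply: peq_trans (pe_catr v H1) _; exact: pe_catl.
Qed.

Lemma inv_letterK : involutive inv_letter.
Proof. by case=> a b; rewrite /inv_letter /= negbK. Qed.

Lemma winv_r w : pe (w ++ winv w) [::].
Proof.
elim: w => [|x w IH] /=; first exact: peq_refl.
rewrite /winv /= rev_cons -cats1 -/(winv w).
apply: (@peq_trans _ _ (x :: [:: inv_letter x])) _.
- have := pe_ctx [:: x] [:: inv_letter x] IH.
  by rewrite /= -catA.
- exact: (peq_cancel rels [::] [::] x).
Qed.

Lemma winv_l w : pe (winv w ++ w) [::].
Proof.
elim: w => [|x w IH] /=; first exact: peq_refl.
rewrite /winv /= rev_cons -cats1 -/(winv w).
apply: (@peq_trans _ _ (winv w ++ w)) IH.
have := peq_cancel rels (winv w) w (inv_letter x).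
by rewrite inv_letterK -!catA.
Qed.

Lemma flatten_nseq_comm (v : word) k : v ++ flatten (nseq k v) = flatten (nseq k v) ++ v.
Proof.
elim: k => [|k IH]; first by rewrite /= cats0.
by rewrite /= IH catA IH.
Qed.

Lemma flatten_nseqS (v : word) k : flatten (nseq k.+1 v) = flatten (nseq k v) ++ v.
Proof. by rewrite -flatten_nseq_comm. Qed.

Lemma wpowS w k : pe (wpow w (k + 1)) (wpow w k ++ w).
Proof.
case: k => [m|m].
- have -> : (Posz m + 1 = Posz m.+1)%R by lia.
  rewrite /= -flatten_nseqS /=; exact: peq_refl.
- case: m => [|m].
  + have -> : (Negz 0 + 1 = Posz 0)%R by lia.
    rewrite /=; apply: peq_sym; rewrite cats0; exact: winv_l.
  + have -> : (Negz m.+1 + 1 = Negz m)%R by lia.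
    have -> : wpow w (Negz m.+1) = wpow w (Negz m) ++ winv w
      by rewrite /wpow flatten_nseqS.
    rewrite -catA.
    apply: peq_sym; apply: (@peq_trans _ _ (wpow w (Negz m) ++ [::])).
    * apply: pe_catl; exact: winv_l.
    * rewrite cats0; exact: peq_refl.
Qed.

Lemma wpowP w m : pe (wpow w m ++ winv w) (wpow w (m - 1)).
Proof.
have := wpowS w (m - 1); rewrite subrK => H.
apply: peq_trans (pe_catr _ H) _; rewrite -catA.
apply: peq_trans (pe_catl _ (winv_r w)) _; rewrite cats0; exact: peq_refl.
Qed.

Lemma wpowD w m k : pe (wpow w m ++ wpow w k) (wpow w (m + k)).
Proof.
case: k => [j|j].
- elim: j => [|j IH]; first by rewrite addr0 cats0; exact: peq_refl.
  have E : (Posz j.+1 = Posz j + 1)%R by lia.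
  rewrite E addrA.
  apply: (@peq_trans _ _ (wpow w m ++ wpow w j ++ w)).
  + apply: pe_catl; exact: wpowS.
  + apply: peq_sym; apply: peq_trans (wpowS _ _) _; rewrite catA.
    apply: pe_catr; exact: peq_sym.
- elim: j => [|j IH].
  + have -> : (m + Negz 0 = m - 1)%R by lia.
    have -> : wpow w (Negz 0) = winv w by rewrite /= cats0.
    exact: wpowP.
  + have -> : (m + Negz j.+1 = (m + Negz j) - 1)%R by lia.
    have -> : wpow w (Negz j.+1) = wpow w (Negz j) ++ winv w
      by rewrite /wpow flatten_nseqS.
    rewrite catA; apply: peq_trans (pe_catr _ IH) _; exact: wpowP.
Qed.

Lemma wpowDe w m k l : (m + k = l)%R -> pe (wpow w m ++ wpow w k) (wpow w l).
Proof. by move=> <-; exact: wpowD. Qed.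

End Peq.

Definition hom (phi : letter -> word) (u : word) : word := flatten (map phi u).

Lemma hom_cat phi u v : hom phi (u ++ v) = hom phi u ++ hom phi v.
Proof. by rewrite /hom map_cat flatten_cat. Qed.

Lemma hom1 phi l : hom phi [:: l] = phi l.
Proof. by rewrite /hom /= cats0. Qed.

Lemma hom_cons phi l u : hom phi (l :: u) = phi l ++ hom phi u.
Proof. by []. Qed.

Lemma pe_join R L M N : peq R L M -> peq R N M -> peq R L N.
Proof. by move=> H1 H2; apply: peq_trans H1 (peq_sym H2). Qed.

Lemma hom_peq phi R S :
  (forall l, peq S (phi l ++ phi (inv_letter l)) [::]) ->
  (forall l r, (l, r) \in R -> peq S (hom phi l) (hom phi r)) ->
  forall u v, peq R u v -> peq S (hom phi u) (hom phi v).
Proof.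
move=> Hc Hr u v; elim=> {u v} [w|u v _ IH|u v w _ IH1 _ IH2|u v x|u v l r H].
- exact: peq_refl.
- exact: peq_sym.
- exact: peq_trans IH1 IH2.
- rewrite !hom_cat.
  have -> : hom phi [:: x; inv_letter x] = phi x ++ phi (inv_letter x)
    by rewrite /hom /= cats0.
  exact: pe_ctx (Hc x).
- rewrite !hom_cat; exact: pe_ctx (Hr _ _ H).
Qed.

Lemma hom_back psi phi R :
  (forall l, peq R (hom psi (phi l)) [:: l]) ->
  forall u, peq R (hom psi (hom phi u)) u.
Proof.
move=> H; elim=> [|l u IH]; first exact: peq_refl.
rewrite hom_cons hom_cat -cat1s; exact: pe_cat.
Qed.

Lemma hom_nseq phi (v : word) m : hom phi v = v ->
  hom phi (flatten (nseq m v)) = flatten (nseq m v).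
Proof.
move=> Hv; elim: m => [|m IH] //.
change (flatten (nseq m.+1 v)) with (v ++ flatten (nseq m v)).
by rewrite hom_cat IH Hv.
Qed.

Lemma hom_X phi k : phi (false, false) = gen1 -> phi (false, true) = winv gen1 ->
  hom phi (wpow gen1 k) = wpow gen1 k.
Proof.
move=> H1 H2; case: k => m; rewrite /wpow; apply: hom_nseq.
- by rewrite /hom /= H1.
- by rewrite /hom /= H2.
Qed.

Lemma pe_mid R A B C D : peq R (A ++ B) [::] -> peq R (C ++ D) [::] ->
  peq R ((C ++ A) ++ (B ++ D)) [::].
Proof.
move=> H1 H2; rewrite -catA (catA A B D).
apply: peq_trans (pe_ctx C D H1) _; exact: H2.
Qed.

Lemma pe_X0 R a b : (a + b = 0)%R -> peq R (wpow gen1 a ++ wpow gen1 b) [::].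
Proof. move=> H; apply: peq_trans (wpowD _ _ _ _) _; rewrite H; exact: peq_refl. Qed.

Section Main.
Variable n : int.
Local Notation X := (wpow gen1).

Definition phiF (l : letter) : word :=
  if l.1 then (if l.2 then X n ++ winv gen2 else gen2 ++ X (- n))
  else (if l.2 then winv gen1 else gen1).

Definition phiG (l : letter) : word :=
  if l.1 then (if l.2 then X (- n) ++ winv gen2 else gen2 ++ X n)
  else (if l.2 then winv gen1 else gen1).

Lemma homF_X k : hom phiF (X k) = X k. Proof. exact: hom_X. Qed.
Lemma homG_X k : hom phiG (X k) = X k. Proof. exact: hom_X. Qed.

Lemma X1 : X 1 = gen1. Proof. by []. Qed.

Lemma XDr R a c : (a + 1 = c)%R -> peq R (X a ++ gen1) (X c).
Proof. by move=> H; have := wpowDe R gen1 H; rewrite X1. Qed.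
Lemma XDl R a c : (1 + a = c)%R -> peq R (gen1 ++ X a) (X c).
Proof. by move=> H; have := wpowDe R gen1 H; rewrite X1. Qed.

Lemma cancF l : peq braid3_rels (phiF l ++ phiF (inv_letter l)) [::].
Proof.
case: l => [[] []].
- change (peq braid3_rels ((X n ++ winv gen2) ++ (gen2 ++ X (- n))) [::]).
  apply: pe_mid; [apply: winv_l | apply: pe_X0; exact: addrN].
- change (peq braid3_rels ((gen2 ++ X (- n)) ++ (X n ++ winv gen2)) [::]).
  apply: pe_mid; [apply: pe_X0; exact: addNr | apply: winv_r].
- exact: winv_l.
- exact: winv_r.
Qed.

Lemma cancG l : peq (G_rels n) (phiG l ++ phiG (inv_letter l)) [::].
Proof.
case: l => [[] []].
- change (peq (G_rels n) ((X (- n) ++ winv gen2) ++ (gen2 ++ X n)) [::]).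
  apply: pe_mid; [apply: winv_l | apply: pe_X0; exact: addNr].
- change (peq (G_rels n) ((gen2 ++ X n) ++ (X (- n) ++ winv gen2)) [::]).
  apply: pe_mid; [apply: pe_X0; exact: addrN | apply: winv_r].
- exact: winv_l.
- exact: winv_r.
Qed.

Lemma homF_y : hom phiF gen2 = gen2 ++ X (- n).
Proof. by rewrite /hom /= cats0. Qed.
Lemma homG_y : hom phiG gen2 = gen2 ++ X n.
Proof. by rewrite /hom /= cats0. Qed.

Lemma relF' : peq braid3_rels (hom phiF (gen1 ++ gen2 ++ gen1)) (hom phiF (gen2 ++ X (n + 1) ++ gen2)).
Proof.
rewrite !hom_cat homF_X homF_y.
have Hx : hom phiF gen1 = gen1 by [].
rewrite Hx.
apply: (@pe_join _ _ (gen1 ++ gen2 ++ X (1 - n))).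
- rewrite -!catA; apply: pe_catl; apply: pe_catl.
  apply: XDr; exact: addrC.
- rewrite -!catA.
  apply: (@peq_trans _ _ (gen2 ++ gen1 ++ gen2 ++ X (- n))).
  + apply: pe_catl; rewrite catA; apply: pe_catr.
    have := @wpowDe braid3_rels gen1 (- n) (n + 1) 1.
    rewrite X1 => H; apply: H; by rewrite addrA addNr add0r.
  + apply: (@peq_trans _ _ (gen1 ++ gen2 ++ gen1 ++ X (- n))).
    * have := @peq_rel braid3_rels [::] (X (- n)) _ _ (mem_head _ _).
      move=> H; exact: (peq_sym H).
    * apply: pe_catl; apply: pe_catl; exact: XDl.
Qed.

Lemma relG' : peq (G_rels n) (hom phiG (gen1 ++ gen2 ++ gen1)) (hom phiG (gen2 ++ gen1 ++ gen2)).
Proof.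
rewrite !hom_cat homG_y.
have Hx : hom phiG gen1 = gen1 by [].
rewrite Hx.
have XS : peq (G_rels n) (X n ++ gen1) (X (n + 1)) by apply: XDr.
apply: (@pe_join _ _ (gen2 ++ X (n + 1) ++ gen2 ++ X n)).
- rewrite -!catA.
  apply: (@peq_trans _ _ (gen1 ++ gen2 ++ gen1 ++ X n)).
  + apply: pe_catl; apply: pe_catl; apply: (peq_trans XS).
    apply: peq_sym; apply: XDl; exact: addrC.
  + have := @peq_rel (G_rels n) [::] (X n) _ _ (mem_head _ _).
    by rewrite /= -!catA.
- rewrite -!catA; apply: pe_catl; rewrite catA; apply: pe_catr; exact: XS.
Qed.

Lemma relF l r : (l, r) \in G_rels n -> peq braid3_rels (hom phiF l) (hom phiF r).
Proof. by rewrite inE => /eqP [-> ->]; exact: relF'. Qed.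

Lemma relG l r : (l, r) \in braid3_rels -> peq (G_rels n) (hom phiG l) (hom phiG r).
Proof. by rewrite inE => /eqP [-> ->]; exact: relG'. Qed.

Lemma GF l : peq (G_rels n) (hom phiG (phiF l)) [:: l].
Proof.
case: l => [[] []].
- change (peq (G_rels n) (hom phiG (X n ++ winv gen2)) [:: (true, true)]).
  rewrite hom_cat homG_X.
  have -> : hom phiG (winv gen2) = X (- n) ++ winv gen2 by rewrite /hom /= cats0.
  rewrite catA; apply: (@peq_trans _ _ ([::] ++ winv gen2)); last exact: peq_refl.
  apply: pe_catr; apply: pe_X0; exact: addrN.
- change (peq (G_rels n) (hom phiG (gen2 ++ X (- n))) [:: (true, false)]).
  rewrite hom_cat homG_X homG_y -catA.
  apply: (@peq_trans _ _ (gen2 ++ [::])); last exact: peq_refl.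
  apply: pe_catl; apply: pe_X0; exact: addrN.
- exact: peq_refl.
- exact: peq_refl.
Qed.

Lemma FG l : peq braid3_rels (hom phiF (phiG l)) [:: l].
Proof.
case: l => [[] []].
- change (peq braid3_rels (hom phiF (X (- n) ++ winv gen2)) [:: (true, true)]).
  rewrite hom_cat homF_X.
  have -> : hom phiF (winv gen2) = X n ++ winv gen2 by rewrite /hom /= cats0.
  rewrite catA; apply: (@peq_trans _ _ ([::] ++ winv gen2)); last exact: peq_refl.
  apply: pe_catr; apply: pe_X0; exact: addNr.
- change (peq braid3_rels (hom phiF (gen2 ++ X n)) [:: (true, false)]).
  rewrite hom_cat homF_X homF_y -catA.
  apply: (@peq_trans _ _ (gen2 ++ [::])); last exact: peq_refl.
  apply: pe_catl; apply: pe_X0; exact: addNr.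
- exact: peq_refl.
- exact: peq_refl.
Qed.

End Main.

Theorem mainTheorem8 (n : int) : pres_iso (G_rels n) braid3_rels.
Proof.
exists (hom (phiF n)); split.
- exact: hom_peq (@cancF n) (@relF n).
- by move=> u v; rewrite hom_cat; exact: peq_refl.
- move=> u v H.
  have H' := hom_peq (@cancG n) (@relG n) H.
  apply: pe_join (peq_trans (peq_sym (hom_back (@GF n) u)) H') _.
  exact: peq_sym (hom_back (@GF n) v).
- move=> w; exists (hom (phiG n) w); exact: hom_back (@FG n) w.
Qed.
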